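(* Under the hypotheses of the setting below, for every $k$ with $H_k\bar z^k\neq H_kz^k$ the stepsize satisfies $\alpha_k\ge \tfrac{\delta_k}{\gamma_k}+\tfrac12>0$, the update satisfies $z^{k+1}=(1-\lambda_k)z^k+\lambda_k P_{\mathcal D_k}(z^k)$ where $P_{\mathcal D_k}$ is the Euclidean projection onto the closed half-space $\mathcal D_k=\{w:\langle H_kz^k-H_k\bar z^k,\bar z^k-w\rangle\ge\tfrac{\delta_k}{\gamma_k}\|H_kz^k-H_k\bar z^k\|^2\}$, $\mathcal S^\star\subseteq\mathcal D_k$, and for every $z^\star\in\mathcal S^\star$ $$\|z^{k+1}-z^\star\|^2\le\|z^k-z^\star\|^2-\frac{\lambda_k(2-\lambda_k)(\tfrac{\gamma_k}{2}+\delta_k)^2}{\gamma_k^2}\|H_k\bar z^k-H_kz^k\|^2 .$$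
   Context: Setting: $A:\mathbb R^n\rightrightarrows\mathbb R^n$ maximally monotone, $F:\mathbb R^n\to\mathbb R^n$ $L$-Lipschitz, $T=A+F$, $\operatorname{zer}T=\{z:0\in Tz\}$; there is a nonempty $\mathcal S^\star\subseteq\operatorname{zer}T$ and $\rho\in\mathbb R$ with $\langle v,z-z^\star\rangle\ge\rho\|v\|^2$ for all $z^\star\in\mathcal S^\star$, $(z,v)$ with $v\in Tz$. Parameters: $\lambda_k\in(0,2)$, $\gamma_k\in(\max\{0,-2\rho\},\tfrac1L]$, $\delta_k\in(-\tfrac{\gamma_k}2,\rho]$. Iteration (AdaptiveEG+): $H_k:=\mathrm{id}-\gamma_kF$, $\bar z^k=(\mathrm{id}+\gamma_kA)^{-1}(z^k-\gamma_kFz^k)$, $\alpha_k=\frac{\delta_k}{\gamma_k}+\frac{\langle\bar z^k-z^k,H_k\bar z^k-H_kz^k\rangle}{\|H_k\bar z^k-H_kz^k\|^2}$, $z^{k+1}=z^k+\lambda_k\alpha_k(H_k\bar z^k-H_kz^k)$. *)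

(* Defs.v *)
From mathcomp Require Import all_boot all_order all_algebra.
From mathcomp Require Import reals.
Set Implicit Arguments. Unset Strict Implicit. Unset Printing Implicit Defensive.
Import Order.TTheory GRing.Theory Num.Theory.
Local Open Scope ring_scope.

Section Defs.
Variables (R : realType) (n : nat).
Notation V := 'rV[R]_n.

Definition dotp (u v : V) : R := \sum_(i < n) u ord0 i * v ord0 i.
Definition vnorm (u : V) : R := Num.sqrt (dotp u u).

(* A set-valued operator A : R^n ⇉ R^n is given by its graph: A z v <-> v ∈ A z *)
Definition monotone (A : V -> V -> Prop) : Prop :=
  forall z1 z2 v1 v2, A z1 v1 -> A z2 v2 -> 0 <= dotp (v1 - v2) (z1 - z2).

Definition maximally_monotone (A : V -> V -> Prop) : Prop :=
  monotone A /\
  forall z v, (forall z' v', A z' v' -> 0 <= dotp (v - v') (z - z')) -> A z v.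

Definition lipschitz (F : V -> V) (L : R) : Prop :=
  forall x y, vnorm (F x - F y) <= L * vnorm (x - y).

(* graph of T = A + F : v ∈ T z <-> v - F z ∈ A z *)
Definition sumop (A : V -> V -> Prop) (F : V -> V) (z v : V) : Prop := A z (v - F z).

Definition zer (T : V -> V -> Prop) (z : V) : Prop := T z 0.

(* y = (id + g A)^{-1} x  <->  x ∈ y + g A y  <->  (x - y)/g ∈ A y  (g > 0) *)
Definition resolvent_rel (A : V -> V -> Prop) (g : R) (x y : V) : Prop :=
  A y (g^-1 *: (x - y)).

Definition Hop (g : R) (F : V -> V) (x : V) : V := x - g *: F x.

Definition is_proj (C : V -> Prop) (x p : V) : Prop :=
  C p /\ forall w, C w -> vnorm (x - p) <= vnorm (x - w).

End Defs.

(* Main.v *)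
Require Import Defs.
From mathcomp Require Import all_boot all_order all_algebra.
From mathcomp Require Import reals.
From mathcomp Require Import ring lra.
Import Order.TTheory GRing.Theory Num.Theory.
Local Open Scope ring_scope.

Section Lems.
Context {R : realType} {n : nat}.
Implicit Types u v w : 'rV[R]_n.

Lemma dotpC u v : dotp u v = dotp v u.
Proof. by apply: eq_bigr => i _; rewrite mulrC. Qed.
Lemma dotpDl u v w : dotp (u + v) w = dotp u w + dotp v w.
Proof. rewrite /dotp -big_split /=; apply: eq_bigr => i _; by rewrite mxE mulrDl. Qed.
Lemma dotpZl (a : R) u w : dotp (a *: u) w = a * dotp u w.
Proof. rewrite /dotp mulr_sumr; apply: eq_bigr => i _; by rewrite mxE mulrA. Qed.
Lemma dotpNl u w : dotp (- u) w = - dotp u w.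
Proof. by rewrite -scaleN1r dotpZl mulN1r. Qed.
Lemma dotpDr u v w : dotp w (u + v) = dotp w u + dotp w v.
Proof. by rewrite dotpC dotpDl !(dotpC w). Qed.
Lemma dotpZr (a : R) u w : dotp w (a *: u) = a * dotp w u.
Proof. by rewrite dotpC dotpZl dotpC. Qed.
Lemma dotpNr u w : dotp w (- u) = - dotp w u.
Proof. by rewrite dotpC dotpNl dotpC. Qed.
Lemma dotp_sub_sq u v (c : R) : dotp (u - c *: v) (u - c *: v) = dotp u u - 2 * c * dotp u v + c ^+ 2 * dotp v v.
Proof. rewrite !(dotpDl, dotpDr, dotpNl, dotpNr, dotpZl, dotpZr) (dotpC v u); ring. Qed.
Lemma dotp_sub_l u v (c : R) : dotp u (u - c *: v) = dotp u u - c * dotp u v.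
Proof. by rewrite dotpDr dotpNr dotpZr. Qed.
Lemma dotp_ge0 u : 0 <= dotp u u.
Proof. by apply: sumr_ge0 => i _; rewrite -expr2 sqr_ge0. Qed.
Lemma vnorm_sq u : vnorm u ^+ 2 = dotp u u.
Proof. by rewrite /vnorm sqr_sqrtr // dotp_ge0. Qed.
Lemma vnorm_ge0 u : 0 <= vnorm u.
Proof. exact: sqrtr_ge0. Qed.
Lemma vnorm_le u v : dotp u u <= dotp v v -> vnorm u <= vnorm v.
Proof. by move=> h; rewrite /vnorm ler_sqrt // dotp_ge0. Qed.
Lemma vnorm_le_sq u v : vnorm u <= vnorm v -> dotp u u <= dotp v v.
Proof.
move=> h; rewrite -!vnorm_sq; have := vnorm_ge0 u; nra.
Qed.
Lemma dotp_eq0 u : dotp u u = 0 -> u = 0.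
Proof.
have hp : forall j : 'I_n, true -> 0 <= u ord0 j * u ord0 j.
  by move=> j _; rewrite -expr2 sqr_ge0.
move=> h; have H := psumr_eq0P hp h.
apply/rowP => j; rewrite mxE.
have /eqP := H j isT.
by rewrite mulf_eq0 orbb => /eqP.
Qed.
End Lems.

Theorem mainTheorem2 (R : realType) (n : nat)
  (A : 'rV[R]_n -> 'rV[R]_n -> Prop) (F : 'rV[R]_n -> 'rV[R]_n) (L : R)
  (S : 'rV[R]_n -> Prop) (rho : R)
  (lam gam del : nat -> R) (z zbar : nat -> 'rV[R]_n) :
  maximally_monotone A ->
  0 < L -> lipschitz F L ->
  (exists zs, S zs) ->
  (forall zs, S zs -> zer (sumop A F) zs) ->
  (forall zs, S zs -> forall w v, sumop A F w v ->
       rho * vnorm v ^+ 2 <= dotp v (w - zs)) ->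
  (forall k, 0 < lam k < 2) ->
  (forall k, 0 < gam k /\ - (2 * rho) < gam k /\ gam k <= L^-1) ->
  (forall k, - (gam k / 2) < del k <= rho) ->
  (forall k, resolvent_rel A (gam k) (z k - gam k *: F (z k)) (zbar k)) ->
  (forall k, z k.+1 = z k + (lam k *
      (del k / gam k
       + dotp (zbar k - z k) (Hop (gam k) F (zbar k) - Hop (gam k) F (z k))
         / vnorm (Hop (gam k) F (zbar k) - Hop (gam k) F (z k)) ^+ 2))
      *: (Hop (gam k) F (zbar k) - Hop (gam k) F (z k))) ->
  forall k,
    let H := Hop (gam k) F in
    let alpha := del k / gam k
       + dotp (zbar k - z k) (H (zbar k) - H (z k))
         / vnorm (H (zbar k) - H (z k)) ^+ 2 in
    let D := fun w => del k / gam k * vnorm (H (z k) - H (zbar k)) ^+ 2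
                      <= dotp (H (z k) - H (zbar k)) (zbar k - w) in
    H (zbar k) != H (z k) ->
    [/\ del k / gam k + 2^-1 <= alpha /\ 0 < del k / gam k + 2^-1,
        (exists p, is_proj D (z k) p),
        (forall p, is_proj D (z k) p -> z k.+1 = (1 - lam k) *: z k + lam k *: p),
        (forall zs, S zs -> D zs) &
        (forall zs, S zs ->
           vnorm (z k.+1 - zs) ^+ 2 <= vnorm (z k - zs) ^+ 2
             - lam k * (2 - lam k) * (gam k / 2 + del k) ^+ 2 / gam k ^+ 2
               * vnorm (H (zbar k) - H (z k)) ^+ 2)].
Proof.
move=> hmono hL hlip hex hzer hS hlam hgam hdel hres hz k; cbv zeta.
have [hg0 [hgr hgL]] := hgam k.
have /andP[hd1 hd2] := hdel k.
have /andP[hl1 hl2] := hlam k.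
have hres' := hres k. have hzk := hz k.
have hlipk := hlip (zbar k) (z k).
move: hres' hzk hlipk hg0 hgr hgL hd1 hd2 hl1 hl2.
rewrite /Hop /resolvent_rel.
set x := z k; set y := zbar k; set x1 := z k.+1; set g := gam k; set d := del k; set l := lam k.
have eu : (y - g *: F y) - (x - g *: F x) = (y - x) - g *: (F y - F x).
  by apply/rowP=> i; rewrite !mxE; ring.
have eu' : (x - g *: F x) - (y - g *: F y) = - ((y - x) - g *: (F y - F x)).
  by apply/rowP=> i; rewrite !mxE; ring.
rewrite eu eu' => hres' hzk hlipk hg0 hgr hgL hd1 hd2 hl1 hl2 hne.
have {}hne : (y - x) - g *: (F y - F x) != 0 by rewrite -eu subr_eq0.
set a := y - x; set b := F y - F x; set u := a - g *: b.
rewrite !vnorm_sq dotpNl dotpNr opprK.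
move: hzk hres' hne; rewrite -/a -/b -/u vnorm_sq => hzk hres' hne.
have hU0 : 0 < dotp u u.
  rewrite lt0r dotp_ge0 andbT; apply/eqP => /dotp_eq0 h; by rewrite h eqxx in hne.
have hUn : dotp u u != 0 by rewrite lt0r_neq0.
set U := dotp u u in hzk hU0 hUn *.
set al := d / g + dotp a u / U in hzk *.
have hal : al * U = d / g * U + dotp a u by rewrite /al mulrDl divfK.
have hlb : dotp b b <= L^+2 * dotp a a.
  have := vnorm_ge0 b; have := vnorm_ge0 a; rewrite -!vnorm_sq; nra.
have hgL1 : g * L <= 1.
  by rewrite -(mulVf (lt0r_neq0 hL)) ler_pM2r.
have eP : dotp a u = dotp a a - g * dotp a b by rewrite /u dotp_sub_l.
have eU : U = dotp a a - 2 * g * dotp a b + g^+2 * dotp b b.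
  by rewrite /U /u dotp_sub_sq.
have haa := dotp_ge0 a.
have hP : U / 2 <= dotp a u.
  have h1 : g^+2 * dotp b b <= g^+2 * (L^+2 * dotp a a) by rewrite ler_wpM2l // sqr_ge0.
  have h2 : (g * L)^+2 <= 1.
    have := mulr_gt0 hg0 hL; nra.
  have h3 : (g * L)^+2 * dotp a a <= dotp a a by nra.
  rewrite eU eP; nra.
have hc : 0 < d / g + 2^-1.
  have hdc : d = (d / g) * g by rewrite divfK // lt0r_neq0.
  rewrite hdc in hd1; nra.
have hal1 : d / g + 2^-1 <= al.
  by rewrite /al lerD2l ler_pdivlMr //; lra.
have hal0 : 0 < al by lra.
have hSD : forall zs, S zs -> d / g * U <= dotp (- u) (y - zs).
  move=> zs hzs.
  have hv : sumop A F y (- g^-1 *: u).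
    rewrite /sumop; suff -> : - g^-1 *: u - F y = g^-1 *: (x - g *: F x - y) by [].
    rewrite /u /a /b; apply/rowP => i; rewrite !mxE; field; exact: lt0r_neq0.
  have := hS zs hzs y _ hv.
  rewrite vnorm_sq !dotpZl !dotpZr -/U.
  set e := dotp u (y - zs).
  have ht : g * g^-1 = 1 by rewrite mulfV // lt0r_neq0.
  have ht0 : 0 < g^-1 by rewrite invr_gt0.
  set t := g^-1 in ht ht0 *.
  move=> h; have := ler_wpM2l (ltW hg0) h.
  have -> : g * (rho * (- t * (- t * U))) = rho * t * U * (g * t) by ring.
  have -> : g * (- t * e) = - e * (g * t) by ring.
  rewrite ht !mulr1 => h2.
  have h3 : 0 <= (rho - d) * t * U by rewrite mulr_ge0 ?mulr_ge0 // ?subr_ge0 // ltW.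
  rewrite dotpNl -/e; nra.
have ey : forall w, y - w = a - al *: u + (x + al *: u - w).
  by move=> w; rewrite /a; apply/rowP => i; rewrite !mxE; ring.
have ex : forall w, x - w = (x + al *: u - w) - al *: u.
  by move=> w; apply/rowP => i; rewrite !mxE; ring.
have hua : dotp u a = dotp a u by rewrite dotpC.
clearbody u; clearbody a b.
have key : forall w, d / g * U <= dotp (- u) (y - w) ->
   dotp (x - w) (x - w) = al^+2 * U - 2 * al * dotp u (x + al *: u - w)
      + dotp (x + al *: u - w) (x + al *: u - w)
   /\ dotp u (x + al *: u - w) <= 0.
  move=> w; rewrite ey ex; move: (x + al *: u - w) => q.
  rewrite !(dotpDl, dotpDr, dotpNl, dotpNr, dotpZl, dotpZr) hua (dotpC q u) -/U => hw.
  split; [ring | nra].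
have hDp0 : d / g * U <= dotp (- u) (y - (x + al *: u)).
  rewrite ey subrr addr0 !(dotpDl, dotpDr, dotpNl, dotpNr, dotpZl, dotpZr) hua -/U; nra.
have hproj : is_proj (fun w => d / g * U <= dotp (- u) (y - w)) x (x + al *: u).
  split => // w hw; apply: vnorm_le; have [-> h2] := key w hw.
  rewrite ex subrr add0r !(dotpNl, dotpNr, dotpZl, dotpZr) -/U.
  have := dotp_ge0 (x + al *: u - w); nra.
split => //.
- by exists (x + al *: u).
- move=> p [hp hmin].
  have /vnorm_le_sq := hmin _ hDp0.
  have [-> h2] := key p hp.
  rewrite ex subrr add0r !(dotpNl, dotpNr, dotpZl, dotpZr) -/U => h.
  have hq0 := dotp_ge0 (x + al *: u - p).
  have hq : dotp (x + al *: u - p) (x + al *: u - p) = 0 by nra.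
  have /eqP := dotp_eq0 _ hq; rewrite subr_eq0 => /eqP <-.
  by rewrite hzk; apply/rowP => i; rewrite !mxE; ring.
- move=> zs hzs.
  have hD := hSD zs hzs.
  rewrite !vnorm_sq hzk.
  have -> : x + (l * al) *: u - zs = (x - zs) + (l * al) *: u.
    by apply/rowP => i; rewrite !mxE; ring.
  move: hD; rewrite ey.
  have -> : x + al *: u - zs = (x - zs) + al *: u.
    by apply/rowP => i; rewrite !mxE; ring.
  move: (x - zs) => e.
  rewrite !(dotpDl, dotpDr, dotpNl, dotpNr, dotpZl, dotpZr) hua (dotpC e u) -/U => hD.
  have hsq : l * (2 - l) * (g / 2 + d) ^+ 2 / g ^+ 2 = l * (2 - l) * (d / g + 2^-1) ^+ 2.
    by field; rewrite lt0r_neq0.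
  rewrite hsq.
  set c := d / g + 2^-1 in hsq hc hal1 *.
  set P := dotp u e in hD *.
  have hPe : P <= - al * U by nra.
  have h1 : 2 * l * al * P <= 2 * l * al * (- al * U).
    by rewrite ler_wpM2l // ?mulr_ge0 // ltW.
  have h2 : c ^+ 2 <= al ^+ 2 by rewrite ler_pXn2r // ?nnegrE ltW // (lt_le_trans hc).
  have h3 : 0 <= l * (2 - l) * U by rewrite !mulr_ge0 // ltW // subr_gt0.
  have h4 := ler_wpM2l h3 h2.
  nra.
Qed.
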